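(* Let $r\ge3$, $n>r$, $\lambda\in\Lambda(n,r)$ (regarded as an $n$-periodic sequence) and $1\le i\le n$. In $T$: (i) $E_i1_\lambda=1_{\lambda+\alpha_i}E_i$ if $\lambda_{i+1}>0$, and $E_i1_\lambda=0$ otherwise; (ii) $F_i1_\lambda=1_{\lambda-\alpha_i}F_i$ if $\lambda_i>0$, and $F_i1_\lambda=0$ otherwise.
   Context: $T$ is the $\mathbb{Q}(v)$-algebra with generators $E_i,F_i,K_i^{\pm1}$ ($1\le i\le n$, indices mod $n$) and relations: $K_iK_j=K_jK_i$; $K_iK_i^{-1}=K_i^{-1}K_i=1$; $K_iE_j=v^{\epsilon^+(i,j)}E_jK_i$; $K_iF_j=v^{-\epsilon^+(i,j)}F_jK_i$ ($\epsilon^+(i,j)=1$ if $j=i$, $-1$ if $j\equiv i-1\pmod n$, $0$ otherwise); $E_iF_j-F_jE_i=\delta_{ij}\frac{K_iK_{i+1}^{-1}-K_i^{-1}K_{i+1}}{v-v^{-1}}$; $E_iE_j=E_jE_i$, $F_iF_j=F_jF_i$ if $i-j\not\equiv\pm1$; $E_i^2E_j-(v+v^{-1})E_iE_jE_i+E_jE_i^2=0$, $F_i^2F_j-(v+v^{-1})F_iF_jF_i+F_jF_i^2=0$ if $i-j\equiv\pm1\pmod n$; $K_1\cdots K_n=v^r$; $\prod_{j=0}^r(K_i-v^j)=0$. $\Lambda(n,r)$: compositions of $r$ into $n$ nonnegative parts, extended $n$-periodically ($\lambda_{n+1}=\lambda_1$). $1_\lambda=\prod_{i=1}^n\prod_{s=1}^{\lambda_i}\frac{K_iv^{-s+1}-K_i^{-1}v^{s-1}}{v^s-v^{-s}}$.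 $\alpha_i\in\mathbb{Z}^n$ has $j$-th entry $1$ if $j\equiv i$, $-1$ if $j\equiv i+1\pmod n$, $0$ otherwise. *)

(* Defs.v *)
From HB Require Import structures.
From mathcomp Require Import all_boot all_order all_algebra.
Set Implicit Arguments. Unset Strict Implicit. Unset Printing Implicit Defensive.
Import Order.TTheory GRing.Theory Num.Theory.
Local Open Scope ring_scope.

Definition Qv : fieldType := {fraction {poly rat}}.
Definition v : Qv := tofrac ('X : {poly rat}).

(* Indices 1..n (mod n) are represented by 'I_n (i.e. 0..n-1);
   i+1 mod n is [ordS i]. *)

Definition epsp (n : nat) (i j : 'I_n) : int :=
  if j == i then 1 else if i == ordS j then -1 else 0.

Definition T_relations (n r : nat) (A : algType Qv)
    (E F K Ki : 'I_n -> A) : Prop :=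
  (forall i j, K i * K j = K j * K i) /\
      (forall i, K i * Ki i = 1 /\ Ki i * K i = 1) /\
      (forall i j, K i * E j = (v ^ epsp i j) *: (E j * K i)) /\
      (forall i j, K i * F j = (v ^ (- epsp i j)) *: (F j * K i)) /\
      (forall i j, E i * F j - F j * E i =
          if i == j then (v - v^-1)^-1 *: (K i * Ki (ordS i) - Ki i * K (ordS i))
          else 0) /\
      (forall i j, j != ordS i -> i != ordS j ->
          E i * E j = E j * E i /\ F i * F j = F j * F i) /\
      (forall i j, (j == ordS i) || (i == ordS j) ->
          E i * E i * E j - (v + v^-1) *: (E i * E j * E i) + E j * E i * E i = 0 /\
          F i * F i * F j - (v + v^-1) *: (F i * F j * F i) + F j * F i * F i = 0  ) /\
      \prod_(i < n) K i = (v ^+ r) *: 1 /\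
      (forall i, \prod_(0 <= j < r.+1) (K i - (v ^+ j) *: 1) = 0).

Definition one_lam (n : nat) (A : algType Qv) (K Ki : 'I_n -> A)
    (lam : 'I_n -> nat) : A :=
  \prod_(i < n) \prod_(1 <= s < (lam i).+1)
     ((v ^ (1 - (s:int)) / (v ^+ s - v ^- s)) *: K i
      - (v ^ ((s:int) - 1) / (v ^+ s - v ^- s)) *: Ki i).

Definition plus_alpha (n : nat) (lam : 'I_n -> nat) (i : 'I_n) : 'I_n -> nat :=
  fun j => if j == i then (lam j + 1)%N
           else if j == ordS i then (lam j - 1)%N else lam j.
Definition minus_alpha (n : nat) (lam : 'I_n -> nat) (i : 'I_n) : 'I_n -> nat :=
  fun j => if j == i then (lam j - 1)%N
           else if j == ordS i then (lam j + 1)%N else lam j.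

(* Main.v *)
Require Import Defs.
From HB Require Import structures.
From mathcomp Require Import all_boot all_order all_algebra.
Import Order.TTheory GRing.Theory Num.Theory.
Local Open Scope ring_scope.
Set Warnings "-notation-overridden,-ambiguous-paths".
From mathcomp Require Import zify.
Lemma v_neq0 : v != 0.
Proof. by rewrite /v tofrac_eq0 polyX_eq0. Qed.

Lemma vXn_eq1 (k : nat) : v ^+ k = 1 -> k = 0%N.
Proof.
rewrite /v -rmorphXn -(rmorph1 (@tofrac _)) => /eqP; rewrite tofrac_eq => /eqP.
move/(congr1 (fun p : {poly rat} => size p)); rewrite size_polyXn size_poly1.
by case.
Qed.

Lemma vz_eq1 (z : int) : v ^ z = 1 -> z = 0.
Proof.
case: z => k /=.
  by move/vXn_eq1 => ->.
rewrite NegzE -exprnN -[1](invr1) => /invr_inj /vXn_eq1 //.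
Qed.

Lemma vz_inj (a b : int) : v ^ a = v ^ b -> a = b.
Proof.
move=> h; apply/eqP; rewrite -subr_eq0; apply/eqP/vz_eq1.
rewrite expfzDr ?v_neq0 // h -invr_expz mulfV // expfz_neq0 // v_neq0.
  by [].
Qed.

Lemma vz_neq0 (z : int) : v ^ z != 0.
Proof. by rewrite expfz_neq0 // v_neq0. Qed.
Section Gen.
Variable A : algType Qv.

Lemma prod_actL (I : Type) (s : seq I) (P : pred I) (f : I -> A) (a : I -> Qv) (X : A) :
  (forall k, P k -> f k * X = a k *: X) ->
  (\prod_(k <- s | P k) f k) * X = (\prod_(k <- s | P k) a k) *: X.
Proof.
move=> h; elim: s => [|x s IH]; first by rewrite !big_nil mul1r scale1r.
rewrite !big_cons; case: ifP => Px //.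
by rewrite -mulrA IH -scalerAr h // scalerA mulrC.
Qed.

Lemma prod_actR (I : Type) (s : seq I) (P : pred I) (f : I -> A) (a : I -> Qv) (X : A) :
  (forall k, P k -> X * f k = a k *: X) ->
  X * (\prod_(k <- s | P k) f k) = (\prod_(k <- s | P k) a k) *: X.
Proof.
move=> h; elim/last_ind: s => [|s x IH]; first by rewrite !big_nil mulr1 scale1r.
rewrite -!cats1 !big_cat !big_cons !big_nil /=; case: ifP => Px.
  by rewrite !mulr1 mulrA IH -scalerAl h // scalerA.
by rewrite !mulr1.
Qed.

Lemma prod_kill (I : eqType) (s : seq I) (f : I -> A) (y : A) (k : I) :
  k \in s -> (forall j, GRing.comm y (f j)) -> y * f k = 0 ->
  y * \prod_(j <- s) f j = 0.
Proof.
move=> + hc hk; elim: s => [|x s IH] //.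
rewrite in_cons big_cons => /orP [/eqP <-|/IH h]; first by rewrite mulrA hk mul0r.
by rewrite mulrA hc -mulrA h mulr0.
Qed.

Lemma comm_horner_alg (x a : A) (p : {poly Qv}) :
  GRing.comm x a -> GRing.comm x (horner_alg a p).
Proof.
move=> hxa; elim/poly_ind: p => [|p c IH]; first by rewrite rmorph0; apply: commr0.
rewrite rmorphD rmorphM /= horner_algX horner_algC.
apply: commrD; first by apply: commrM.
by rewrite /GRing.comm -scalerAl -scalerAr mul1r mulr1.
Qed.
End Gen.
Definition xs (j : nat) : Qv := v ^+ j.
Lemma xs_inj : injective xs.
Proof. by move=> a b /(@vz_inj a b) [] . Qed.

Definition LL (r : nat) (m : 'I_r.+1) : {poly Qv} := tnth (r.+1.-lagrange xs) m.

Lemma sumLL r : \sum_(m < r.+1) LL r m = 1.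
Proof.
have := @lagrange_gen _ r.+1 xs (ltn0Sn _) xs_inj 1 _.
move=> h; rewrite [RHS]h ?size_poly1 //; apply: eq_bigr => m _.
by rewrite -polyC1 hornerC polyC1 mul1r.
Qed.

Lemma killLL r (m : 'I_r.+1) : exists c : Qv,
  ('X - (xs m)%:P) * LL r m = c%:P * \prod_(j < r.+1) ('X - (xs j)%:P).
Proof.
rewrite /LL lagrangeE //= ?xs_inj //.
set p := \prod_(j < r.+1 | j != m) _.
exists ((p.[xs m])^-1); rewrite (bigD1 m) //= -/p.
  by rewrite mulrCA.
exact: xs_inj.
Qed.
Section Main.
Variables (n r : nat) (A : algType Qv) (K Ki : 'I_n -> A).
Hypothesis HKK : forall i j, K i * K j = K j * K i.
Hypothesis HKi : forall i, K i * Ki i = 1 /\ Ki i * K i = 1.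
Hypothesis Hprod : \prod_(i < n) K i = (v ^+ r) *: 1.
Hypothesis Hpol : forall i, \prod_(0 <= j < r.+1) (K i - (v ^+ j) *: 1) = 0.

Definition LW (X : A) (mu : 'I_n -> int) := forall k, K k * X = v ^ mu k *: X.
Definition RW (X : A) (mu : 'I_n -> int) := forall k, X * K k = v ^ mu k *: X.

Definition coef (s : nat) (t : int) : Qv :=
  (v ^ (1 - (s:int)) / (v ^+ s - v ^- s)) * v ^ t
  - (v ^ ((s:int) - 1) / (v ^+ s - v ^- s)) * v ^ (- t).

Definition cl (lam : 'I_n -> nat) (mu : 'I_n -> int) : Qv :=
  \prod_(k < n) \prod_(1 <= s < (lam k).+1) coef s (mu k).

Lemma KiL X mu k : LW X mu -> Ki k * X = v ^ (- mu k) *: X.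
Proof.
move=> h; have := congr1 (fun y => Ki k * y) (h k).
rewrite mulrA (proj2 (HKi k)) mul1r -scalerAr => e.
by rewrite {2}e scalerA -invr_expz mulVf ?vz_neq0 ?scale1r.
Qed.

Lemma KiR X mu k : RW X mu -> X * Ki k = v ^ (- mu k) *: X.
Proof.
move=> h; have := congr1 (fun y => y * Ki k) (h k).
rewrite -mulrA (proj1 (HKi k)) mulr1 -scalerAl => e.
by rewrite {2}e scalerA -invr_expz mulVf ?vz_neq0 ?scale1r.
Qed.

Lemma evalL lam X mu : LW X mu -> one_lam K Ki lam * X = cl lam mu *: X.
Proof.
move=> h; rewrite /one_lam /cl; apply: prod_actL => k _; apply: prod_actL => s _.
rewrite mulrBl -!scalerAl h (KiL X mu k h) !scalerA -scalerBl; congr (_ *: _).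
Qed.

Lemma evalR lam X mu : RW X mu -> X * one_lam K Ki lam = cl lam mu *: X.
Proof.
move=> h; rewrite /one_lam /cl; apply: prod_actR => k _; apply: prod_actR => s _.
rewrite mulrBr -!scalerAr h (KiR X mu k h) !scalerA -scalerBl; congr (_ *: _).
Qed.

Definition gg (z : int) : Qv := v ^ z - v ^ (- z).

Lemma gg_neq0 (s : nat) : (0 < s)%N -> gg s%:Z != 0.
Proof.
move=> s0; rewrite /gg subr_eq0; apply/negP => /eqP /vz_inj; lia.
Qed.

Lemma coef_eq s t : (0 < s)%N -> coef s t = gg (t + 1 - s%:Z) / gg s%:Z.
Proof.
move=> s0; rewrite /coef /gg exprnN.
rewrite mulrAC [X in _ - X]mulrAC -mulrBl; congr (_ / _).
by rewrite -!expfzDr ?v_neq0 //; congr (v ^ _ - v ^ _); lia.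
Qed.

Lemma coef_zero (t : nat) : coef t.+1 t = 0.
Proof.
rewrite coef_eq // /gg.
have -> : (t%:Z + 1 - t.+1%:Z) = 0 by lia.
by rewrite oppr0 subrr mul0r.
Qed.

Lemma cl_one1 (t : nat) : \prod_(1 <= s < t.+1) coef s t = 1.
Proof.
rewrite big_nat_cond (eq_bigr (fun s => gg (t%:Z + 1 - s%:Z) / gg s%:Z)); last first.
  by move=> s /andP [/andP [s0 _] _]; rewrite coef_eq.
rewrite -big_nat_cond prodf_div.
rewrite [X in X / _]big_nat_rev /=.
rewrite [X in X / _]big_nat_cond [X in _ / X]big_nat_cond.
rewrite (eq_bigr (fun s => gg s%:Z)); last first.
  move=> s /andP [/andP [s0 st] _]; congr gg; lia.
rewrite mulfV //.
rewrite prodf_seq_neq0; apply/allP => s; rewrite mem_index_iota => /andP [s0 _] /=.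
by apply/implyP => _; apply: gg_neq0.
Qed.
Lemma cl_one lam : cl lam (fun k => (lam k)%:Z) = 1.
Proof. by rewrite /cl big1 // => k _; rewrite cl_one1. Qed.

Lemma cl_zero lam (m : 'I_n -> nat) k : (m k < lam k)%N ->
  cl lam (fun k => (m k)%:Z) = 0.
Proof.
move=> h; rewrite /cl (bigD1 k) //=; apply/eqP; rewrite mulf_eq0; apply/orP; left.
rewrite prodf_seq_eq0; apply/hasP; exists (m k).+1.
  by rewrite mem_index_iota /= ltnS.
by rewrite (coef_zero (m k)) eqxx.
Qed.

Definition ee (k : 'I_n) (m : 'I_r.+1) : A := horner_alg (K k) (LL r m).
Definition eF (f : {ffun 'I_n -> 'I_r.+1}) : A := \prod_(k < n) ee k (f k).

Lemma sum_ee k : \sum_(m < r.+1) ee k m = 1.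
Proof. by rewrite /ee -rmorph_sum sumLL rmorph1. Qed.

Lemma sum_eF : \sum_f eF f = 1.
Proof.
rewrite /eF -bigA_distr_bigA /=.
by rewrite big1 // => k _; rewrite sum_ee.
Qed.

Lemma comm_ee j k m : GRing.comm (K j) (ee k m).
Proof. apply: comm_horner_alg; exact: HKK. Qed.

Lemma comm_sc (c : Qv) (X : A) : GRing.comm (c *: 1) X.
Proof. by rewrite /GRing.comm -scalerAl -scalerAr mul1r mulr1. Qed.

Lemma kill_ee k (m : 'I_r.+1) : (K k - v ^+ m *: 1) * ee k m = 0.
Proof.
have [c hc] := killLL r m.
have := congr1 (horner_alg (K k)) hc.
rewrite !rmorphM /= rmorphB /= horner_algX !horner_algC rmorph_prod /=.
rewrite /ee /xs => ->.
have -> : \prod_(i < r.+1) horner_alg (K k) ('X - (v ^+ i)%:P) = 0.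
  rewrite -(Hpol k) big_mkord; apply: eq_bigr => i _.
  by rewrite rmorphB /= horner_algX horner_algC.
by rewrite mulr0.
Qed.
Lemma comm_eF j f : GRing.comm (K j) (eF f).
Proof. by apply: commr_prod => k _; apply: comm_ee. Qed.

Lemma LW_eF f : LW (eF f) (fun k => (f k : nat)%:Z).
Proof.
move=> k.
have := @prod_kill A _ (index_enum 'I_n) (fun j => ee j (f j)) (K k - v ^+ (f k) *: 1) k.
rewrite mem_index_enum => /(_ isT) h.
have {}h := h (fun j => commr_sym (commrB (commr_sym (comm_ee k j (f j))) (commr_sym (comm_sc _ _)))) (kill_ee k (f k)).
by move/eqP: h; rewrite mulrBl -scalerAl mul1r subr_eq0 => /eqP.
Qed.

Lemma RW_eF f : RW (eF f) (fun k => (f k : nat)%:Z).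
Proof. by move=> k; rewrite -(comm_eF k f) LW_eF. Qed.

Lemma eF_zero (f : {ffun 'I_n -> 'I_r.+1}) : (\sum_k (f k : nat))%N != r -> eF f = 0.
Proof.
move=> hs.
have h1 := @prod_actL A _ (index_enum 'I_n) xpredT K (fun k => v ^+ (f k)) (eF f) (fun k _ => LW_eF f k).
move: h1; rewrite Hprod prodrXr -scalerAl mul1r => /eqP; rewrite -subr_eq0 -scalerBl.
rewrite scaler_eq0 => /orP [|/eqP //].
rewrite subr_eq0 => /eqP e.
have := @vz_inj r (\sum_i f i)%N e; case => /esym /eqP.
by rewrite (negbTE hs).
Qed.
Lemma Z_eq (lam : 'I_n -> nat) : (\sum_k lam k)%N = r ->
  exists c, one_lam K Ki lam = c *: eF [ffun k => inord (lam k)].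
Proof.
move=> hs.
have le k : (lam k <= r)%N by rewrite -hs (bigD1 k) //= leq_addr.
set f0 := [ffun k => inord (lam k)] : {ffun 'I_n -> 'I_r.+1}.
have f0E k : (f0 k : nat) = lam k by rewrite ffunE inordK // ltnS.
exists (cl lam (fun k => (f0 k : nat)%:Z)).
rewrite -[LHS]mulr1 -sum_eF mulr_sumr.
rewrite (eq_bigr (fun f : {ffun 'I_n -> 'I_r.+1} => cl lam (fun k => (f k : nat)%:Z) *: eF f)); last first.
  by move=> f _; apply: evalL; apply: LW_eF.
rewrite (bigD1 f0) //= big1 ?addr0 // => f hf.
case: (boolP [exists k, (f k < lam k)%N]) => [/existsP [k hk]|].
  by rewrite (cl_zero lam (fun k => (f k : nat)) k hk) scale0r.
rewrite negb_exists => /forallP hall.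
have hle k : (lam k <= f k)%N by have := hall k; rewrite -leqNgt.
rewrite eF_zero ?scaler0 //; apply/negP => /eqP hf2.
move: hf => /eqP; apply; apply/ffunP => k; apply: val_inj; rewrite /= f0E.
have : (\sum_k (f k - lam k))%N == 0%N by rewrite sumnB // hf2 hs subnn.
rewrite sum_nat_eq0 => /forallP /(_ k) /=; rewrite subn_eq0 => h.
by apply/eqP; rewrite eqn_leq h hle.
Qed.
Lemma LW_Z (lam : 'I_n -> nat) : (\sum_k lam k)%N = r ->
  LW (one_lam K Ki lam) (fun k => (lam k)%:Z).
Proof.
move=> hs; have [c ->] := Z_eq lam hs; move=> k.
have le : (lam k <= r)%N by rewrite -hs (bigD1 k) //= leq_addr.
rewrite -scalerAr LW_eF ffunE inordK ?ltnS // !scalerA mulrC.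
by [].
Qed.

Lemma RW_Z (lam : 'I_n -> nat) : (\sum_k lam k)%N = r ->
  RW (one_lam K Ki lam) (fun k => (lam k)%:Z).
Proof.
move=> hs; have [c ->] := Z_eq lam hs; move=> k.
have le : (lam k <= r)%N by rewrite -hs (bigD1 k) //= leq_addr.
rewrite -scalerAl RW_eF ffunE inordK ?ltnS // !scalerA mulrC.
by [].
Qed.

Lemma fixL (lam : 'I_n -> nat) X : LW X (fun k => (lam k)%:Z) -> one_lam K Ki lam * X = X.
Proof. by move=> h; rewrite (evalL lam X _ h) cl_one scale1r. Qed.

Lemma fixR (lam : 'I_n -> nat) X : RW X (fun k => (lam k)%:Z) -> X * one_lam K Ki lam = X.
Proof. by move=> h; rewrite (evalR lam X _ h) cl_one scale1r. Qed.

Lemma vanish X mu k : LW X mu -> mu k = -1 -> X = 0.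
Proof.
move=> h hk.
have e : (\prod_(0 <= j < r.+1) (K k - (v ^+ j) *: 1)) * X
    = (\prod_(0 <= j < r.+1) (v ^ (-1) - v ^+ j)) *: X.
  by apply: prod_actL => j _; rewrite mulrBl h hk -scalerAl mul1r scalerBl.
move: e; rewrite (Hpol k) mul0r => /esym/eqP.
rewrite scaler_eq0 => /orP [|/eqP //].
rewrite prodf_seq_eq0 => /hasP [j _ /=]; rewrite subr_eq0 => /eqP /(@vz_inj (-1) j).
done.
Qed.

Lemma LW_shift (G X : A) (w mu : 'I_n -> int) :
  (forall k, K k * G = v ^ w k *: (G * K k)) -> LW X mu -> LW (G * X) (fun k => w k + mu k).
Proof.
move=> hG h k; rewrite mulrA hG -scalerAl -mulrA h -scalerAr scalerA -expfzDr //.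
exact: v_neq0.
Qed.

Lemma RW_shift (G Y : A) (w mu : 'I_n -> int) :
  (forall k, K k * G = v ^ w k *: (G * K k)) -> RW Y mu -> RW (Y * G) (fun k => mu k - w k).
Proof.
move=> hG h k.
have e : G * K k = v ^ (- w k) *: (K k * G).
  by rewrite hG scalerA -expfzDr ?v_neq0 // addNr scale1r.
rewrite -mulrA e -scalerAr mulrA h -scalerAl scalerA -expfzDr ?v_neq0 //.
by rewrite addrC.
Qed.

Lemma LW_ext X mu mu' : (forall k, mu k = mu' k) -> LW X mu -> LW X mu'.
Proof. by move=> e h k; rewrite -e h. Qed.

Lemma RW_ext X mu mu' : (forall k, mu k = mu' k) -> RW X mu -> RW X mu'.
Proof. by move=> e h k; rewrite -e h. Qed.

Lemma mainG (G : A) (w : 'I_n -> int) (lam nu : 'I_n -> nat) :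
  (forall k, K k * G = v ^ w k *: (G * K k)) ->
  (\sum_k lam k)%N = r -> (\sum_k nu k)%N = r ->
  (forall k, (nu k)%:Z = w k + (lam k)%:Z) ->
  G * one_lam K Ki lam = one_lam K Ki nu * G.
Proof.
move=> hG hl hn hw.
have h1 := LW_shift G (one_lam K Ki lam) w _ hG (LW_Z lam hl).
have h2 := RW_shift G (one_lam K Ki nu) w _ hG (RW_Z nu hn).
rewrite -(fixL nu (G * one_lam K Ki lam)); last first.
  by apply: LW_ext h1 => k; rewrite hw.
rewrite mulrA fixR //; apply: RW_ext h2 => k; rewrite hw; lia.
Qed.

Lemma mainV (G : A) (w : 'I_n -> int) (lam : 'I_n -> nat) k :
  (forall k, K k * G = v ^ w k *: (G * K k)) ->
  (\sum_k lam k)%N = r -> w k + (lam k)%:Z = -1 ->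
  G * one_lam K Ki lam = 0.
Proof.
move=> hG hl hk.
exact: (vanish _ _ k (LW_shift G (one_lam K Ki lam) w _ hG (LW_Z lam hl)) hk).
Qed.
End Main.


Lemma ordS_neq n (i : 'I_n) : (1 < n)%N -> (ordS i != i).
Proof.
move=> n1; apply/negP => /eqP /(congr1 val) /=.
case: (ltnP i.+1 n) => h; first by rewrite modn_small //; lia.
have e : i.+1 = n by have := ltn_ord i; lia.
rewrite e modnn => i0; lia.
Qed.

Lemma plus_alphaE n (lam : 'I_n -> nat) i k : ordS i != i -> (0 < lam (ordS i))%N ->
  (plus_alpha lam i k)%:Z = epsp k i + (lam k)%:Z.
Proof.
move=> hn hp; rewrite /plus_alpha /epsp.
case: (eqVneq k i) => [->|hki]; first by rewrite ?eqxx; lia.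
rewrite ?(eq_sym i k) ?(negbTE hki); case: (eqVneq k (ordS i)) => [e|hk2]; last by lia.
by rewrite e in hki *; lia.
Qed.

Lemma minus_alphaE n (lam : 'I_n -> nat) i k : ordS i != i -> (0 < lam i)%N ->
  (minus_alpha lam i k)%:Z = - epsp k i + (lam k)%:Z.
Proof.
move=> hn hp; rewrite /minus_alpha /epsp.
case: (eqVneq k i) => [->|hki]; first by rewrite ?eqxx; lia.
rewrite ?(eq_sym i k) ?(negbTE hki); case: (eqVneq k (ordS i)) => [e|hk2]; last by lia.
by rewrite e in hki *; lia.
Qed.

Lemma sum_alpha n (lam nu : 'I_n -> nat) (i : 'I_n) : ordS i != i ->
  (forall k, k != i -> k != ordS i -> nu k = lam k) ->
  (nu i + nu (ordS i) = lam i + lam (ordS i))%N ->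
  (\sum_k nu k)%N = (\sum_k lam k)%N.
Proof.
move=> hn hk hs.
rewrite (bigD1 i) //= [RHS](bigD1 i) //= (bigD1 (ordS i)) //= [in RHS](bigD1 (ordS i)) //=.
rewrite (eq_bigr lam); last by move=> k /andP [h1 h2]; apply: hk.
lia.
Qed.

Theorem lemma2p2p6 (n r : nat) (A : algType Qv) (E F K Ki : 'I_n -> A)
    (lam : 'I_n -> nat) (i : 'I_n) :
  (3 <= r)%N -> (r < n)%N ->
  T_relations r E F K Ki ->
  (\sum_(j < n) lam j)%N = r ->
  (E i * one_lam K Ki lam =
     if (0 < lam (ordS i))%N then one_lam K Ki (plus_alpha lam i) * E i else 0)
  /\
  (F i * one_lam K Ki lam =
     if (0 < lam i)%N then one_lam K Ki (minus_alpha lam i) * F i else 0).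
Proof.
move=> hr hn [HKK [HKi [HKE [HKF [_ [_ [_ [Hprod Hpol]]]]]]]] hs.
have hneq : ordS i != i by apply: ordS_neq; lia.
have hE : forall k, K k * E i = v ^ epsp k i *: (E i * K k) by move=> k; apply: HKE.
have hF : forall k, K k * F i = v ^ (- epsp k i) *: (F i * K k) by move=> k; apply: HKF.
split.
- case: ifP => hp.
    apply: (@mainG n r A K Ki HKK HKi Hprod Hpol (E i) (fun k => epsp k i) lam (plus_alpha lam i) hE hs) => [|k]; last exact: plus_alphaE.
    rewrite -hs; apply: (@sum_alpha n lam _ i hneq).
      by move=> k h1 h2; rewrite /plus_alpha (negbTE h1) (negbTE h2).
    by rewrite /plus_alpha eqxx (negbTE hneq) eqxx; lia.
  apply: (@mainV n r A K Ki HKK HKi Hprod Hpol (E i) (fun k => epsp k i) lam (ordS i) hE hs).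
  rewrite /epsp eq_sym (negbTE hneq) eqxx; move/negbT: hp; rewrite -leqNgt leqn0 => /eqP ->.
  by [].
- case: ifP => hp.
    apply: (@mainG n r A K Ki HKK HKi Hprod Hpol (F i) (fun k => - epsp k i) lam (minus_alpha lam i) hF hs) => [|k]; last exact: minus_alphaE.
    rewrite -hs; apply: (@sum_alpha n lam _ i hneq).
      by move=> k h1 h2; rewrite /minus_alpha (negbTE h1) (negbTE h2).
    by rewrite /minus_alpha eqxx (negbTE hneq) eqxx; lia.
  apply: (@mainV n r A K Ki HKK HKi Hprod Hpol (F i) (fun k => - epsp k i) lam i hF hs).
  rewrite /epsp eqxx; move/negbT: hp; rewrite -leqNgt leqn0 => /eqP ->.
  by [].
Qed.
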